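(* For every $n\ge3$, every maximally even set of vertices of $C_n$ is a maximizer of $W$ on $C_n$. However, the converse fails: there exist $n$ and sets of vertices of $C_n$ that are maximizers of $W$ but are not maximally even.
   Context: $C_n$ has vertex set $\{0,\dots,n-1\}$ with $i$ adjacent to $i+1\bmod n$; $d$ is geodesic distance and $d^*(u,v)$ the least non-negative integer congruent to $v-u$ mod $n$. $W(A)=\sum_{\{u,v\}\subseteq A,u\ne v}d(u,v)$; $A$ is a maximizer of $W$ if $W(A)=\max\{W(B):|B|=|A|\}$. For $A=\{a_0<\dots<a_{m-1}\}$, $\mathrm{span}_A(a_i,a_j)$ is the least positive integer congruent to $j-i$ mod $m$, and $\sigma^*_k(A)=[\,d^*(u,v):u,v\in A,u\ne v,\mathrm{span}_A(u,v)=k\,]$. $A$ is maximally even if for each $1\le k\le m-1$ the set of values of $\sigma^*_k(A)$ is one integer or two consecutive integers. *)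

(* Defs.v *)
From mathcomp Require Import all_boot.
Set Implicit Arguments. Unset Strict Implicit. Unset Printing Implicit Defensive.

Section Cycle.
Variable n : nat.

Definition dstar (u v : 'I_n) : nat := (v + n - u) %% n.

Definition dist (u v : 'I_n) : nat := minn (dstar u v) (dstar v u).

Definition W (A : {set 'I_n}) : nat :=
  \sum_(u in A) \sum_(v in A | u < v) dist u v.

Definition maximizer (A : {set 'I_n}) : Prop :=
  forall B : {set 'I_n}, #|B| = #|A| -> W B <= W A.

(* index i of u in the increasing enumeration a_0 < ... < a_{m-1} of A *)
Definition idx (A : {set 'I_n}) (u : 'I_n) : nat := #|[set x in A | x < u]|.

(* span_A(a_i, a_j): least positive integer congruent to j - i mod m
   (for a_i <> a_j this is (j - i) mod m, which lies in 1..m-1) *)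
Definition span (A : {set 'I_n}) (u v : 'I_n) : nat :=
  (idx A v + #|A| - idx A u) %% #|A|.

Definition max_even (A : {set 'I_n}) : Prop :=
  forall k, 1 <= k <= #|A| - 1 ->
    (exists u v, [/\ u \in A, v \in A, u != v & span A u v = k]) /\
    exists c : nat, forall u v, u \in A -> v \in A -> u != v ->
      span A u v = k -> dstar u v = c \/ dstar u v = c.+1.

End Cycle.

(* Main.v *)
Require Import Defs.
From mathcomp Require Import all_boot.
From mathcomp Require Import zify.
Set Implicit Arguments. Unset Strict Implicit. Unset Printing Implicit Defensive.

Lemma idx_lt n (B : {set 'I_n}) u : u \in B -> idx B u < #|B|.
Proof.
move=> uB; rewrite /idx (cardsD1 u B) uB add1n ltnS.
apply: subset_leq_card; apply/subsetP => x; rewrite !inE => /andP[xB xu].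
by rewrite xB andbT; apply: contraTneq xu => ->; rewrite ltnn.
Qed.

Lemma idx_mono n (B : {set 'I_n}) (u v : 'I_n) : u \in B -> u < v -> idx B u < idx B v.
Proof.
move=> uB uv; rewrite /idx (cardsD1 u [set x in B | x < v]) inE uB uv /= add1n ltnS.
apply: subset_leq_card; apply/subsetP => x; rewrite !inE => /andP[xB xu].
rewrite xB (ltn_trans xu uv) !andbT.
by apply: contraTneq xu => ->; rewrite ltnn.
Qed.

Lemma idx_inj n (B : {set 'I_n}) (u v : 'I_n) :
  u \in B -> v \in B -> idx B u = idx B v -> u = v.
Proof.
move=> uB vB e; case: (ltngtP u v) => h.
- by have := idx_mono uB h; rewrite e ltnn.
- by have := idx_mono vB h; rewrite e ltnn.
- exact: val_inj.
Qed.

Lemma idx_surj n (B : {set 'I_n}) j : j < #|B| -> exists2 u, u \in B & idx B u = j.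
Proof.
move=> jB; have m0 : 0 < #|B| by apply: leq_ltn_trans jB.
pose h (u : 'I_n) : 'I_#|B|.-1.+1 := inord (idx B u).
have hinj : {in B &, injective h}.
  move=> u v uB vB /(congr1 (@nat_of_ord _)); rewrite /h !inordK ?prednK ?idx_lt //.
  exact: idx_inj.
have hT : h @: B = [set: 'I_#|B|.-1.+1].
  apply/eqP; rewrite eqEcard subsetT cardsT card_ord card_in_imset // prednK //; by apply/andP; split.
have : inord j \in h @: B by rewrite hT in_setT.
case/imsetP => u uB /(congr1 (@nat_of_ord _)); rewrite /h !inordK ?prednK ?idx_lt // => hu.
by exists u.
Qed.

Definition e n (B : {set 'I_n}) (x0 : 'I_n) (j : nat) : 'I_n :=
  odflt x0 [pick u in B | idx B u == j %% #|B|].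

Lemma e_spec n (B : {set 'I_n}) x0 j : x0 \in B ->
  e B x0 j \in B /\ idx B (e B x0 j) = j %% #|B|.
Proof.
move=> x0B; have m0 : 0 < #|B| by apply/card_gt0P; exists x0.
rewrite /e; case: pickP => [u /andP[uB /eqP ->] | H] //=.
have [u uB hu] := idx_surj (ltn_pmod j m0).
by move: (H u); rewrite uB hu eqxx.
Qed.

Lemma e_mod n (B : {set 'I_n}) x0 j : e B x0 (j %% #|B|) = e B x0 j.
Proof. by rewrite /e modn_mod. Qed.

Lemma e_add n (B : {set 'I_n}) x0 j : e B x0 (j + #|B|) = e B x0 j.
Proof. by rewrite /e modnDr. Qed.

Lemma e_idx n (B : {set 'I_n}) x0 u : x0 \in B -> u \in B -> e B x0 (idx B u) = u.
Proof.
move=> x0B uB; have [H1 H2] := e_spec (idx B u) x0B.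
by apply: (idx_inj H1 uB); rewrite H2 modn_small // idx_lt.
Qed.

Lemma e_lt n (B : {set 'I_n}) x0 j j' : x0 \in B -> j < j' -> j' < #|B| ->
  e B x0 j < e B x0 j'.
Proof.
move=> x0B jj' j'm.
have [H1 H2] := e_spec j x0B; have [H1' H2'] := e_spec j' x0B.
case: (ltngtP (e B x0 j) (e B x0 j')) => // h.
- have := idx_mono H1' h; rewrite H2 H2' !modn_small //; last exact: ltn_trans j'm.
  by rewrite ltnNge (ltnW jj').
- have : e B x0 j = e B x0 j' by apply: val_inj.
  move/(congr1 (idx B)); rewrite H2 H2' !modn_small //; last exact: ltn_trans j'm.
  by move=> E; move: jj'; rewrite E ltnn.
Qed.

Lemma sum_reindex n (B : {set 'I_n}) x0 (F : 'I_n -> nat) : x0 \in B ->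
  \sum_(u in B) F u = \sum_(j < #|B|) F (e B x0 j).
Proof.
move=> x0B; have m0 : 0 < #|B| by apply/card_gt0P; exists x0.
rewrite (reindex_onto (fun j : 'I_#|B| => e B x0 j)
   (fun u => Ordinal (ltn_pmod (idx B u) m0))) /=.
  apply: eq_bigl => j; have [-> ->] := e_spec j x0B.
  by apply/eqP; apply: val_inj => /=; rewrite modn_mod modn_small.
by move=> u uB; apply: val_inj => /=; rewrite (modn_small (idx_lt uB)) e_idx.
Qed.

Lemma sum_shift m k (h : nat -> nat) : (forall j, h (j + m) = h j) ->
  \sum_(j < m) h (j + k) = \sum_(j < m) h j.
Proof.
elim: k h => [|k IH] h hp; first by apply: eq_bigr => j _; rewrite addn0.
have -> : \sum_(j < m) h (j + k.+1) = \sum_(j < m) (fun i => h i.+1) (j + k).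
  by apply: eq_bigr => j _; rewrite addnS.
rewrite (IH (fun i => h i.+1)); last by move=> j; rewrite /= -addSn hp.
clear IH; case: m hp => [|m] hp; first by rewrite !big_ord0.
rewrite big_ord_recr big_ord_recl /= addnC.
by rewrite -(hp 0) add0n.
Qed.

Lemma sum_const_ord m c : \sum_(j < m) c = m * c.
Proof. by rewrite big_const_ord iter_addn_0 mulnC. Qed.

Lemma dstar_le n (u v : 'I_n) : u <= v -> dstar u v = v - u.
Proof.
move=> uv; rewrite /dstar -addnBAC // modnDr modn_small //.
exact: leq_ltn_trans (leq_subr u v) (ltn_ord v).
Qed.

Lemma dstar_gt n (u v : 'I_n) : v < u -> dstar u v = v + n - u.
Proof.
move=> vu; rewrite /dstar modn_small //.
have := ltn_ord u; lia.
Qed.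

Lemma dstar_ltn n (u v : 'I_n) : dstar u v < n.
Proof. by rewrite /dstar ltn_pmod // (leq_ltn_trans (leq0n u) (ltn_ord u)). Qed.

Lemma dist_f n (u v : 'I_n) : dist u v = minn (dstar u v) (n - dstar u v).
Proof.
rewrite /dist; case: (ltngtP u v) => h.
- rewrite (dstar_le (ltnW h)) (dstar_gt h); have := ltn_ord v; lia.
- rewrite (dstar_le (ltnW h)) (dstar_gt h); have := ltn_ord u; lia.
- have -> : u = v by apply: val_inj.
  by rewrite dstar_le // subnn !min0n.
Qed.

Lemma distC n (u v : 'I_n) : dist u v = dist v u.
Proof. by rewrite /dist minnC. Qed.

Lemma dist0 n (u : 'I_n) : dist u u = 0.
Proof. by rewrite /dist dstar_le // subnn min0n. Qed.

Lemma sum_recl' m (F : nat -> nat) : 0 < m ->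
  \sum_(i < m) F i = F 0 + \sum_(k < m.-1) F k.+1.
Proof. by case: m => // m _; rewrite big_ord_recl. Qed.

Lemma W2 n (B : {set 'I_n}) : B != set0 ->
  W B * 2 = \sum_(u in B) \sum_(v in B) dist u v.
Proof.
move=> _.
rewrite muln2 -addnn {2}/W (exchange_big_dep (fun v => v \in B)) /=; last first.
  by move=> u v _ /andP[].
rewrite /W -big_split /=; apply: eq_bigr => u uB.
rewrite [RHS](bigD1 u) //= dist0 add0n [X in _ = X](bigID (fun v : 'I_n => u < v)) /=.
congr (_ + _).
  apply: eq_bigl => v; rewrite -val_eqE /=.
  case: (ltngtP u v) => h; rewrite ?andbT ?andbF //=.

apply: eq_big => v.
  rewrite -val_eqE /= uB /=. case: (ltngtP u v) => h; by rewrite ?andbT ?andbF.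
by move=> _; rewrite distC.
Qed.

Lemma twoW n (B : {set 'I_n}) x0 : x0 \in B ->
  W B * 2 = \sum_(k < #|B|.-1) \sum_(j < #|B|) dist (e B x0 j) (e B x0 (j + k.+1)).
Proof.
move=> x0B; have m0 : 0 < #|B| by apply/card_gt0P; exists x0.
rewrite W2; last by apply/set0Pn; exists x0.
rewrite (sum_reindex _ x0B) [RHS]exchange_big /=; apply: eq_bigr => j _.
rewrite (sum_reindex _ x0B).
rewrite -(@sum_shift #|B| j (fun i => dist (e B x0 j) (e B x0 i))); last first.
  by move=> i; rewrite e_add.
rewrite (sum_recl' (fun i => dist (e B x0 j) (e B x0 (i + j)))) // add0n dist0 add0n.
by apply: eq_bigr => k _; rewrite addnC.
Qed.

Lemma sum_dstar n (B : {set 'I_n}) x0 K : x0 \in B -> 0 < K < #|B| ->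
  \sum_(j < #|B|) dstar (e B x0 j) (e B x0 (j + K)) = K * n.
Proof.
move=> x0B /andP[K0 Km].
apply: (@addIn (\sum_(j < #|B|) nat_of_ord (e B x0 j))).
rewrite -big_split /=.
rewrite (eq_bigr (fun j : 'I_#|B| => nat_of_ord (e B x0 (j + K)) +
            (if j < #|B| - K then 0 else n))); last first.
  move=> j _; have jm := ltn_ord j; case: ifP => h.
    have hl : e B x0 j < e B x0 (j + K) by apply: e_lt => //; lia.
    by rewrite dstar_le ?(ltnW hl) // addn0 subnK // ltnW.
  have E : e B x0 (j + K) = e B x0 (j + K - #|B|).
    by rewrite -[RHS]e_add subnK //; lia.
  have hl : e B x0 (j + K - #|B|) < e B x0 j by apply: e_lt => //; lia.
  rewrite E dstar_gt // subnK //; apply: ltnW; exact: leq_trans (ltn_ord _) (leq_addl _ _).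
rewrite big_split /= (@sum_shift #|B| K (fun i => nat_of_ord (e B x0 i))); last first.
  by move=> i; rewrite e_add.
rewrite addnC; congr (_ + _).
rewrite -(big_mkord xpredT (fun j => if j < #|B| - K then 0 else n)).
rewrite (@big_cat_nat _ _ _ (#|B| - K)) //=; last exact: leq_subr.
rewrite big_nat_cond big1 ?add0n; last by move=> i /andP[/andP[_ ->]].
rewrite big_nat_cond (eq_bigr (fun=> n)); last first.
  by move=> i /andP[/andP[h _] _]; rewrite ltnNge h.
rewrite -big_nat_cond sum_nat_const_nat; by rewrite subKn // ltnW.
Qed.

Lemma concave_sum n m c (x y : nat -> nat) :
  (forall j, j < m -> x j = c \/ x j = c.+1) ->
  (forall j, j < m -> x j <= n) -> (forall j, j < m -> y j <= n) ->
  \sum_(j < m) x j = \sum_(j < m) y j ->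
  \sum_(j < m) minn (y j) (n - y j) <= \sum_(j < m) minn (x j) (n - x j).
Proof.
move=> hx hxn hyn hs.
have comp z : (forall j, j < m -> z j <= n) ->
    \sum_(j < m) (n - z j) + \sum_(j < m) z j = m * n.
  move=> hz; rewrite -big_split /= -sum_const_ord.
  by apply: eq_bigr => j _; rewrite subnK // hz.
case: (leqP c.*2.+2 n) => h1.
  rewrite [X in _ <= X](eq_bigr (fun j : 'I_m => x j)); last first.
    move=> j _ /=; apply/minn_idPl; have := hx j (ltn_ord j); lia.
  apply: (@leq_trans (\sum_(j < m) y j)); first by apply: leq_sum => j _; exact: geq_minl.
  by rewrite hs.
case: (leqP n c.*2) => h2.
  rewrite [X in _ <= X](eq_bigr (fun j : 'I_m => n - x j)); last first.
    move=> j _ /=; apply/minn_idPr; have := hx j (ltn_ord j); have := hxn j (ltn_ord j); lia.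
  apply: (@leq_trans (\sum_(j < m) (n - y j))); first by apply: leq_sum => j _; exact: geq_minr.
  have := comp _ hxn; have := comp _ hyn; rewrite hs => Hy Hx.
  by apply: eq_leq; apply: (@addIn (\sum_(j < m) y j)); rewrite Hy Hx.
rewrite [X in _ <= X](eq_bigr (fun j : 'I_m => c)); last first.
  move=> j _; have := hx j (ltn_ord j); lia.
apply: leq_sum => j _; lia.
Qed.

Lemma span_e n (B : {set 'I_n}) x0 j K : x0 \in B -> j < #|B| -> 0 < K < #|B| ->
  span B (e B x0 j) (e B x0 (j + K)) = K.
Proof.
move=> x0B jm /andP[K0 Km]; rewrite /span.
have [_ ->] := e_spec j x0B; have [_ ->] := e_spec (j + K) x0B.
move: jm Km; set m := #|B| => jm Km; clearbody m.
rewrite (modn_small jm).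
case: (ltnP (j + K) m) => h.
  rewrite (modn_small h) (_ : j + K + m - j = K + m); last by lia.
  by rewrite modnDr modn_small.
rewrite -{1}(subnK h) modnDr (@modn_small (j + K - m)); last by lia.
rewrite (_ : j + K - m + m - j = K); last by lia.
by rewrite modn_small.
Qed.

Lemma span_same n (B : {set 'I_n}) u : span B u u = 0.
Proof. by rewrite /span addKn modnn. Qed.

Lemma part1 n (A : {set 'I_n}) : max_even A -> maximizer A.
Proof.
move=> hA B hB.
case: (posnP #|A|) => [A0 | m0].
  have -> : B = set0 by apply: cards0_eq; rewrite hB.
  by rewrite /W big_set0.
case/card_gt0P: (m0) => x0 x0A.
have [y0 y0B] : exists y0, y0 \in B by apply/card_gt0P; rewrite hB.
rewrite -(leq_pmul2r (isT : 0 < 2)) (twoW y0B) (twoW x0A) hB.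
apply: leq_sum => k _.
have hk : 0 < k.+1 < #|A| by rewrite ltn0Sn /= -ltn_predRL.
have [_ [c hc]] := hA k.+1 (ltac:(by rewrite subn1 ltn_predRL hk)).
rewrite (eq_bigr (fun j : 'I_#|A| =>
   minn (dstar (e B y0 j) (e B y0 (j + k.+1))) (n - dstar (e B y0 j) (e B y0 (j + k.+1)))));
  last by move=> j _; rewrite dist_f.
rewrite [X in _ <= X](eq_bigr (fun j : 'I_#|A| =>
   minn (dstar (e A x0 j) (e A x0 (j + k.+1))) (n - dstar (e A x0 j) (e A x0 (j + k.+1)))));
  last by move=> j _; rewrite dist_f.
apply: (concave_sum (c := c)
   (x := fun j => dstar (e A x0 j) (e A x0 (j + k.+1)))
   (y := fun j => dstar (e B y0 j) (e B y0 (j + k.+1)))).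
- move=> j jm; have [H1 _] := e_spec j x0A; have [H2 _] := e_spec (j + k.+1) x0A.
  have sp := span_e x0A jm hk.
  apply: hc => //.
  by apply/eqP => E; move: sp; rewrite E span_same.
- by move=> j _; apply: ltnW; apply: dstar_ltn.
- by move=> j _; apply: ltnW; apply: dstar_ltn.
- have HB := sum_dstar y0B (K := k.+1); rewrite hB in HB.
  by rewrite /= (sum_dstar x0A hk) (HB hk).
Qed.

Definition a0 : 'I_6 := @Ordinal 6 0 isT.
Definition a1 : 'I_6 := @Ordinal 6 1 isT.
Definition a3 : 'I_6 := @Ordinal 6 3 isT.
Definition A6 : {set 'I_6} := a0 |: (a1 |: [set a3]).

Lemma A6card : #|A6| = 3.
Proof. by rewrite /A6 !cardsU1 cards1 !inE. Qed.

Lemma idx0 : idx A6 a0 = 0.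
Proof.
rewrite /idx (_ : [set x in A6 | x < a0] = set0) ?cards0 //.
apply/setP => x; rewrite !inE.
by case: x => [[|[|[|[|[|[|x]]]]]] hx].
Qed.

Lemma idx1 : idx A6 a1 = 1.
Proof.
rewrite /idx (_ : [set x in A6 | x < a1] = [set a0]) ?cards1 //.
apply/setP => x; rewrite !inE.
by case: x => [[|[|[|[|[|[|x]]]]]] hx].
Qed.

Lemma idx3 : idx A6 a3 = 2.
Proof.
rewrite /idx (_ : [set x in A6 | x < a3] = a0 |: [set a1]).
  by rewrite cardsU1 cards1 !inE.
apply/setP => x; rewrite !inE.
by case: x => [[|[|[|[|[|[|x]]]]]] hx].
Qed.

Lemma WA6 : W A6 = 6.
Proof.
rewrite /W /A6 !big_setU1 ?big_set1 ?inE //=.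
by rewrite !big_mkcondr /= !big_setU1 ?big_set1 ?inE //=.
Qed.

Lemma A6_not_even : ~ max_even A6.
Proof.
move=> hA; have [_ [c hc]] := hA 1 (ltac:(by rewrite A6card)).
have h1 := hc a0 a1.
have h2 := hc a3 a0.
have i0 : a0 \in A6 by rewrite !inE.
have i1 : a1 \in A6 by rewrite !inE.
have i3 : a3 \in A6 by rewrite !inE.
have s1 : span A6 a0 a1 = 1 by rewrite /span idx0 idx1 A6card.
have s2 : span A6 a3 a0 = 1 by rewrite /span idx0 idx3 A6card.
have := h1 i0 i1 isT s1; have := h2 i3 i0 isT s2.
rewrite /dstar /=; lia.
Qed.

Lemma A6_max : maximizer A6.
Proof.
move=> B hB; rewrite A6card in hB.
have [y0 y0B] : exists y0, y0 \in B by apply/card_gt0P; rewrite hB.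
rewrite -(leq_pmul2r (isT : 0 < 2)) (twoW y0B) WA6 hB.
apply: (@leq_trans (\sum_(k < 2) 6)); last by rewrite sum_const_ord.
apply: leq_sum => k _.
have hk : 0 < k.+1 < 3 by case: k => [[|[|k]] hk].
have hx6 : (k.+1).*2 <= 6 by case: k hk => [[|[|k]] hk].
have hmin : 3 * minn (k.+1).*2 (6 - (k.+1).*2) <= 6 by case: k hk hx6 => [[|[|k]] hk].
rewrite (eq_bigr (fun j : 'I_3 =>
   minn (dstar (e B y0 j) (e B y0 (j + k.+1))) (6 - dstar (e B y0 j) (e B y0 (j + k.+1)))));
  last by move=> j _; rewrite dist_f.
have HB := sum_dstar y0B (K := k.+1); rewrite hB in HB.
have := @concave_sum 6 3 (k.+1).*2 (fun=> (k.+1).*2)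
   (fun j => dstar (e B y0 j) (e B y0 (j + k.+1))).
move=> /(_ _ _ _ _) H; apply: leq_trans (H _ _ _ _) _.
- by move=> j _; left.
- by move=> j _.
- by move=> j _; apply: ltnW; apply: dstar_ltn.
- by rewrite sum_const_ord (HB hk); lia.
- by rewrite sum_const_ord.
Qed.

Theorem mainTheorem15 :
  (forall (n : nat) (A : {set 'I_n}), 3 <= n -> max_even A -> maximizer A) /\
  (exists (n : nat) (A : {set 'I_n}), 3 <= n /\ maximizer A /\ ~ max_even A).
Proof.
split.
  by move=> n A _; apply: part1.
exists 6, A6; split => //; split.
  exact: A6_max.
exact: A6_not_even.
Qed.
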